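(* Let $(x_m)_{m\ge0}$, $(y_n)_{n\ge1}$, $(z_m)_{m\ge0}$ be elements of a commutative ring, and define an array $(a_{n,m})_{n,m\ge0}$ by $a_{0,m}=x_m$ for all $m\ge0$ and $$a_{n,m}=z_m\,a_{n-1,m+1}+y_n\,a_{n-1,m}\qquad(n\ge1,\ m\ge 0).$$ Then for all $n,m\ge0$, $$a_{n,m}=\sum_{k=0}^n x_{m+k}\,(z_mz_{m+1}\cdots z_{m+k-1})\,e_{n-k}(y_1,y_2,\ldots,y_n),$$ where $e_i$ denotes the $i$-th elementary symmetric polynomial (with $e_0=1$) and the empty product equals $1$. *)

(* Defs.v *)
From HB Require Import structures.
From mathcomp Require Import all_boot all_order all_algebra.
Set Implicit Arguments. Unset Strict Implicit. Unset Printing Implicit Defensive.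
Import GRing.Theory.
Local Open Scope ring_scope.

(* elem_sym n i y = e_i(y 1, y 2, ..., y n): the i-th elementary symmetric
   polynomial evaluated at y_1,...,y_n, i.e. the sum over all i-element
   subsets I of {1,...,n} of prod_{j in I} y_j.  (e_0 = 1 = empty product.) *)
Definition elem_sym (R : comPzRingType) (n i : nat) (y : nat -> R) : R :=
  \sum_(I : {set 'I_n} | #|I| == i) \prod_(j in I) y (j.+1)%N.

(* Main.v *)
Require Import Defs.
From HB Require Import structures.
From mathcomp Require Import all_boot all_order all_algebra.
Import GRing.Theory.
Local Open Scope ring_scope.


Lemma not_max_widen n (x : 'I_n.+1) : x != ord_max ->
  exists j : 'I_n, x = widen_ord (leqnSn n) j.
Proof.
move=> hx; have hxn : (x < n)%N.
  by rewrite ltn_neqAle -ltnS ltn_ord andbT; move: hx; apply: contraNneq => e; apply/eqP/val_inj.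
by exists (Ordinal hxn); apply: val_inj.
Qed.

Lemma widen_inj n : injective (widen_ord (leqnSn n)).
Proof. by move=> a b /(congr1 val) e; apply: val_inj. Qed.

Lemma widen_neq n (j : 'I_n) : widen_ord (leqnSn n) j != ord_max.
Proof. by apply/eqP => /(congr1 val) /= e; move: (ltn_ord j); rewrite e ltnn. Qed.

Lemma imset_pre n (I : {set 'I_n.+1}) :
  widen_ord (leqnSn n) @: (widen_ord (leqnSn n) @^-1: I) = I :\ ord_max.
Proof.
apply/setP => x; rewrite !inE; apply/imsetP/andP.
  by case=> j; rewrite inE => jI ->; split => //; apply: widen_neq.
by case=> /not_max_widen [j ->] jI; exists j; rewrite ?inE.
Qed.

Lemma pre_imset n (J : {set 'I_n}) :
  widen_ord (leqnSn n) @^-1: (widen_ord (leqnSn n) @: J) = J.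
Proof. by apply/setP => x; rewrite inE mem_imset //; apply: widen_inj. Qed.

Lemma esym_rec {R : comPzRingType} n k (F : 'I_n.+1 -> R) :
  \sum_(I : {set 'I_n.+1} | #|I| == k.+1) \prod_(j in I) F j =
  \sum_(I : {set 'I_n} | #|I| == k.+1) \prod_(j in I) F (widen_ord (leqnSn n) j)
  + F ord_max * \sum_(I : {set 'I_n} | #|I| == k) \prod_(j in I) F (widen_ord (leqnSn n) j).
Proof.
set w := widen_ord (leqnSn n).
rewrite (bigID (fun I : {set 'I_n.+1} => ord_max \in I)) /= addrC.
congr (_ + _).
  rewrite (reindex_onto (fun J : {set 'I_n} => w @: J) (fun I => w @^-1: I)).
    apply: congr_big => // J.
      rewrite pre_imset eqxx andbT card_imset; last exact: widen_inj.
      case: (#|J| == k.+1) => //=; apply/imsetP => -[j _ /eqP]; apply/negP.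
      by rewrite eq_sym widen_neq.
    by move=> _; rewrite big_imset //= => a b _ _; apply: widen_inj.
  move=> I /andP [_ hI]; rewrite imset_pre; apply/setP => x; rewrite !inE.
  by case: eqP => // ->; rewrite (negPf hI).
rewrite mulr_sumr.
rewrite (reindex_onto (fun J : {set 'I_n} => ord_max |: (w @: J)) (fun I => w @^-1: I)).
  apply: congr_big => // J.
    have hm : ord_max \notin w @: J.
      by apply/imsetP => -[j _ /eqP]; apply/negP; rewrite eq_sym widen_neq.
    have -> : w @^-1: (ord_max |: w @: J) = J.
      apply/setP => x; rewrite !inE mem_imset; last exact: widen_inj.
      by rewrite (negPf (@widen_neq n x)).
    rewrite eqxx andbT cardsU1 hm card_imset; last exact: widen_inj.
    by rewrite setU11 andbT add1n eqSS.
  move=> _; rewrite big_setU1 /=; last first.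
    by apply/imsetP => -[j _ /eqP]; apply/negP; rewrite eq_sym widen_neq.
  by rewrite big_imset //= => a b _ _; apply: widen_inj.
move=> I /andP [_ hI]; rewrite imset_pre; apply/setP => x; rewrite !inE.
by case: eqP => // ->.
Qed.

Lemma esS {R : comPzRingType} n k (y : nat -> R) :
  elem_sym n.+1 k.+1 y = elem_sym n k.+1 y + y n.+1 * elem_sym n k y.
Proof. by rewrite /elem_sym esym_rec. Qed.

Lemma es0 {R : comPzRingType} n (y : nat -> R) : elem_sym n 0 y = 1.
Proof.
rewrite /elem_sym (big_pred1 set0); first by rewrite big_set0.
by move=> I; rewrite /= cards_eq0.
Qed.

Lemma esbig {R : comPzRingType} n k (y : nat -> R) : (n < k)%N -> elem_sym n k y = 0.
Proof.
move=> h; rewrite /elem_sym big_pred0 // => I; apply/negbTE.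
have := max_card (mem I); rewrite card_ord => hI.
by apply/eqP => e; move: h; rewrite -e ltnNge hI.
Qed.

Lemma prodS {R : comPzRingType} (z : nat -> R) m k :
  \prod_(m <= j < m + k.+1) z j = z m * \prod_(m.+1 <= j < m.+1 + k) z j.
Proof.
rewrite addnS big_nat_recl ?leq_addr //; congr (_ * _).
by rewrite -addn1 big_addn addnAC addnK; apply: eq_bigr => i _; rewrite addn1.
Qed.

Theorem mainTheorem6 (R : comPzRingType) (x y z : nat -> R) (a : nat -> nat -> R)
  (a0 : forall m : nat, a 0%N m = x m)
  (aS : forall n m : nat, a n.+1 m = z m * a n m.+1 + y n.+1 * a n m) :
  forall n m : nat,
    a n m = \sum_(0 <= k < n.+1)
              x (m + k)%N * (\prod_(m <= j < m + k) z j) * elem_sym n (n - k) y.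
Proof.
elim=> [|n IH] m.
  by rewrite a0 big_nat1 addn0 big_geq // es0 !mulr1.
rewrite aS !IH mulr_sumr mulr_sumr.
set h := fun k => x (m + k)%N * (\prod_(m <= j < m + k) z j) * elem_sym n (n.+1 - k) y.
have E1 : \sum_(0 <= k < n.+2) x (m + k)%N * (\prod_(m <= j < m + k) z j) * elem_sym n.+1 (n.+1 - k) y
   = \sum_(0 <= k < n.+1) h k + h n.+1 + \sum_(0 <= k < n.+1) y n.+1 * (x (m + k)%N * (\prod_(m <= j < m + k) z j) * elem_sym n (n - k) y).
  rewrite big_nat_recr //= -addrA (addrC (h _)) addrA -big_split /=; congr (_ + _).
    apply: eq_big_nat => k /andP [_ hk]; rewrite /h subSn; last by rewrite -ltnS.
    by rewrite esS mulrDr mulrCA -mulrA.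
  by rewrite /h subnn !es0.
rewrite E1; congr (_ + _).
rewrite -big_nat_recr // big_nat_recl // {1}/h subn0 esbig // mulr0 /= add0r.
apply: eq_bigr => k _; rewrite /h prodS subSS !addnS addSn.
by rewrite !mulrA (mulrC (z m)) ?mulrA.
Qed.
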